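(* Let $f\in C^2([0,\infty))$ satisfy $f(u)>0$ and $f'(u)>0$ for all $u>0$, and assume $f$ is log-concave, i.e. \[ f''(u)f(u)-f'(u)^2<0\quad\text{for all } u>0 . \] Let $u(r)$ be a positive solution of \[ u''+\frac{1}{r}u'+f(u)=0,\quad 0<r<1,\qquad u'(0)=u(1)=0 . \] Then any non-trivial solution $w(r)$ of the linearized problem \[ w''+\frac{1}{r}w'+f'(u(r))w=0,\quad 0<r<1,\qquad w'(0)=w(1)=0 \] does not vanish on $[0,1)$; i.e., replacing $w$ by $-w$ if necessary, $w(r)>0$ on $[0,1)$.
   Context: This is the radial form of the problem $\Delta u+f(u)=0$ on the unit disk in $\mathbb{R}^2$ with zero Dirichlet boundary data. *)

(* Defs.v *)
From Stdlib Require Import Reals.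
From Coquelicot Require Import Coquelicot.
Open Scope R_scope.

Definition right_deriv (g : R -> R) (x l : R) : Prop :=
  filterlim (fun h => (g (x + h) - g x) / h) (at_right 0) (locally l).

Definition C2_on_nonneg (f f1 f2 : R -> R) : Prop :=
  (forall x, 0 < x ->
     is_derive f x (f1 x) /\ is_derive f1 x (f2 x) /\ continuous f2 x) /\
  right_deriv f 0 (f1 0) /\ right_deriv f1 0 (f2 0) /\
  filterlim f2 (at_right 0) (locally (f2 0)).

Definition radial_sol (q : R -> R -> R) (v : R -> R) : Prop :=
  (forall r, 0 < r < 1 ->
     ex_derive v r /\ ex_derive (Derive v) r /\
     Derive (Derive v) r + / r * Derive v r + q r (v r) = 0) /\
  right_deriv v 0 0 /\
  filterlim v (at_left 1) (locally (v 1)) /\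
  v 1 = 0.

(* Main.v *)
Require Import Defs.
From Stdlib Require Import Reals Lra Classical FunctionalExtensionality.
From Coquelicot Require Import Coquelicot.
Open Scope R_scope.

Lemma rd_eps g x l : right_deriv g x l -> forall eps, 0 < eps ->
  exists d, 0 < d /\ forall h, 0 < h < d -> Rabs ((g (x+h) - g x)/h - l) < eps.
Proof.
  unfold right_deriv; intros H eps He.
  destruct (proj1 (filterlim_locally _ _) H (mkposreal eps He)) as [d Hd].
  exists d; split; [apply cond_pos|]. intros h Hh.
  assert (B: ball 0 d h).
  { unfold ball; simpl; unfold AbsRing_ball, abs, minus, plus, opp; simpl.
    replace (h + - 0) with h by ring. rewrite Rabs_right; lra. }
  specialize (Hd h B (proj1 Hh)). exact Hd.
Qed.

Lemma deriv_eps g x l : is_derive g x l -> forall eps, 0 < eps ->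
  exists d, 0 < d /\ forall h, h <> 0 -> Rabs h < d -> Rabs ((g (x+h) - g x)/h - l) < eps.
Proof.
  intros H eps He. apply is_derive_Reals in H.
  destruct (H eps He) as [d Hd]. exists d; split; [apply cond_pos|].
  intros h h0 hd. apply Hd; auto.
Qed.

Lemma cont_eps g x : continuous g x -> forall eps, 0 < eps ->
  exists d, 0 < d /\ forall y, Rabs (y - x) < d -> Rabs (g y - g x) < eps.
Proof.
  intros H eps He.
  destruct (proj1 (filterlim_locally _ _) H (mkposreal eps He)) as [d Hd].
  exists d; split; [apply cond_pos|]. intros y Hy. apply (Hd y). exact Hy.
Qed.

Lemma left_eps g x L : filterlim g (at_left x) (locally L) -> forall eps, 0 < eps ->
  exists d, 0 < d /\ forall y, x - d < y < x -> Rabs (g y - L) < eps.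
Proof.
  intros H eps He.
  destruct (proj1 (filterlim_locally _ _) H (mkposreal eps He)) as [d Hd].
  exists d; split; [apply cond_pos|]. intros y Hy. apply (Hd y).
  - unfold ball; simpl; unfold AbsRing_ball, abs, minus, plus, opp; simpl.
    rewrite Rabs_left; lra.
  - lra.
Qed.

Lemma MVT' g dg x y : (forall z, x <= z <= y -> is_derive g z (dg z)) -> x < y ->
  exists c, x <= c <= y /\ g y - g x = dg c * (y - x).
Proof.
  intros H Hxy.
  destruct (MVT_gen g x y dg) as [c [Hc E]].
  - intros z Hz. rewrite Rmin_left in Hz by lra. rewrite Rmax_right in Hz by lra.
    apply H; lra.
  - intros z Hz. rewrite Rmin_left in Hz by lra. rewrite Rmax_right in Hz by lra.
    apply continuity_pt_filterlim. apply (ex_derive_continuous g z).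
    exists (dg z). apply H; lra.
  - exists c. rewrite Rmin_left in Hc by lra. rewrite Rmax_right in Hc by lra. auto.
Qed.

Lemma is_derive_eq (f : R -> R) x l l' : is_derive f x l -> l = l' -> is_derive f x l'.
Proof. intros H ->; exact H. Qed.

Lemma rad_facts q v : radial_sol q v -> forall r, 0 < r < 1 ->
  is_derive v r (Derive v r) /\
  is_derive (Derive v) r (- (Derive v r / r) - q r (v r)).
Proof.
  intros [H _] r Hr. destruct (H r Hr) as [H1 [H2 H3]]. split.
  - apply Derive_correct; auto.
  - replace (- (Derive v r / r) - q r (v r)) with (Derive (Derive v) r).
    + apply Derive_correct; auto.
    + unfold Rdiv; lra.
Qed.

Lemma rad_g q v : radial_sol q v -> forall r, 0 < r < 1 ->
  is_derive (fun s => s * Derive v s) r (- (r * q r (v r))).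
Proof.
  intros H r Hr. destruct (rad_facts q v H r Hr) as [_ H2].
  assert (D := is_derive_mult (fun s => s) (Derive v) r 1 _ (is_derive_id r) H2 Rmult_comm).
  eapply is_derive_eq; [exact D|]. simpl. unfold plus, mult; simpl. field. lra.
Qed.

Lemma N0_bound q v : radial_sol q v ->
  (exists d0 K, 0 < d0 /\ forall s, 0 < s < d0 -> Rabs (q s (v s)) <= K) ->
  exists d C, 0 < d /\ forall s, 0 < s < d -> Rabs (Derive v s) <= C.
Proof.
  intros Hv [d0 [K [Hd0 HK]]].
  destruct Hv as [Hv1 [Hrd Hrest]].
  destruct (rd_eps v 0 0 Hrd 1 ltac:(lra)) as [d1 [Hd1 Hq]].
  exists (Rmin d1 (Rmin d0 1)), (3 + Rabs K). split.
  { apply Rmin_pos; [lra| apply Rmin_pos; lra]. }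
  intros s Hs.
  assert (s < d1) by (eapply Rlt_le_trans; [apply Hs| apply Rmin_l]).
  assert (s < d0) by (eapply Rlt_le_trans; [apply Hs| eapply Rle_trans; [apply Rmin_r|apply Rmin_l]]).
  assert (s < 1) by (eapply Rlt_le_trans; [apply Hs| eapply Rle_trans; [apply Rmin_r|apply Rmin_r]]).
  assert (Hv : radial_sol q v) by (split; [exact Hv1| split; [exact Hrd| exact Hrest]]).
  destruct (MVT' v (Derive v) (s/2) s) as [c [Hc Ec]].
  { intros z Hz. apply (rad_facts q v Hv z). lra. }
  { lra. }
  assert (A := Hq s ltac:(lra)). assert (B := Hq (s/2) ltac:(lra)).
  rewrite Rplus_0_l, Rminus_0_r in A, B.
  assert (Hc3 : Rabs (Derive v c) < 3).
  { replace (Derive v c) with ((v s - v (s/2)) / (s - s/2)) by (rewrite Ec; field; lra).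
    replace ((v s - v (s/2)) / (s - s/2)) with (2 * ((v s - v 0) / s) - (v (s/2) - v 0) / (s/2)) by (field; lra).
    eapply Rle_lt_trans; [apply Rabs_triang|]. rewrite Rabs_Ropp.
    rewrite Rabs_mult, (Rabs_right 2) by lra. lra. }
  assert (HK0 : Rabs (q s (v s)) <= K) by (apply HK; lra).
  destruct (Rle_lt_or_eq_dec c s (proj2 Hc)) as [Hcs|Hcs].
  2:{ subst c. assert (0 <= Rabs K) by apply Rabs_pos. lra. }
  destruct (MVT' (fun t => t * Derive v t) (fun t => - (t * q t (v t))) c s) as [e [He Ee]].
  { intros z Hz. apply (rad_g q v Hv z). lra. }
  { exact Hcs. }
  assert (HKe : Rabs (q e (v e)) <= Rabs K).
  { eapply Rle_trans; [apply HK; lra| apply Rle_abs]. }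
  assert (Hgs : Rabs (s * Derive v s) <= s * (3 + Rabs K)).
  { replace (s * Derive v s) with (c * Derive v c + (- (e * q e (v e)) * (s - c))) by lra.
    eapply Rle_trans; [apply Rabs_triang|].
    rewrite !Rabs_mult, Rabs_Ropp, Rabs_mult.
    rewrite (Rabs_right c), (Rabs_right e), (Rabs_right (s - c)) by lra.
    assert (0 <= Rabs (q e (v e))) by apply Rabs_pos.
    assert (c * Rabs (Derive v c) <= s * 3).
    { apply Rmult_le_compat; try lra. apply Rabs_pos. }
    assert (e * Rabs (q e (v e)) * (s - c) <= s * Rabs K).
    { replace (s * Rabs K) with (1 * Rabs K * s) by ring.
      apply Rmult_le_compat; try lra.
      - apply Rmult_le_pos; lra.
      - apply Rmult_le_compat; lra. }
    lra. }
  rewrite Rabs_mult, (Rabs_right s) in Hgs by lra.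
  apply Rmult_le_reg_l with s; lra.
Qed.

Lemma N1 q v : radial_sol q v ->
  (exists d0 K, 0 < d0 /\ forall s, 1 - d0 < s < 1 -> Rabs (q s (v s)) <= K) ->
  exists d C, 0 < d /\ forall s, 1 - d < s < 1 -> Rabs (Derive v s) <= C.
Proof.
  intros Hv [d0 [K [Hd0 HK]]].
  set (d := Rmin d0 (1/2)).
  assert (Hd : 0 < d /\ d <= d0 /\ d <= 1/2).
  { unfold d; split; [apply Rmin_pos; lra| split; [apply Rmin_l|apply Rmin_r]]. }
  set (s0 := 1 - d/2).
  exists (d/2), (2 * (Rabs (s0 * Derive v s0) + Rabs K)). split; [lra|].
  intros s Hs.
  destruct (MVT' (fun t => t * Derive v t) (fun t => - (t * q t (v t))) s0 s) as [e [He Ee]].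
  { intros z Hz. apply (rad_g q v Hv z). unfold s0 in *; lra. }
  { unfold s0 in *; lra. }
  assert (HKe : Rabs (q e (v e)) <= Rabs K).
  { eapply Rle_trans; [apply HK; unfold s0 in *; lra| apply Rle_abs]. }
  assert (Hgs : Rabs (s * Derive v s) <= Rabs (s0 * Derive v s0) + Rabs K).
  { replace (s * Derive v s) with (s0 * Derive v s0 + (- (e * q e (v e)) * (s - s0))) by lra.
    eapply Rle_trans; [apply Rabs_triang|].
    rewrite (Rabs_mult (- (e * q e (v e))) (s - s0)), Rabs_Ropp, (Rabs_mult e).
    rewrite (Rabs_right e), (Rabs_right (s - s0)) by (unfold s0 in *; lra).
    assert (0 <= Rabs (q e (v e))) by apply Rabs_pos.
    assert (e * Rabs (q e (v e)) * (s - s0) <= Rabs K).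
    { replace (Rabs K) with (1 * Rabs K * 1) by ring.
      apply Rmult_le_compat; try (unfold s0 in *; lra).
      - apply Rmult_le_pos; unfold s0 in *; lra.
      - apply Rmult_le_compat; unfold s0 in *; lra. }
    lra. }
  rewrite Rabs_mult, (Rabs_right s) in Hgs by (unfold s0 in *; lra).
  assert (0 <= Rabs (Derive v s)) by apply Rabs_pos.
  assert (1/2 * Rabs (Derive v s) <= s * Rabs (Derive v s)).
  { apply Rmult_le_compat_r; auto; unfold s0 in *; lra. }
  lra.
Qed.

Lemma iter_zero x k B0 : 0 <= k < 1 -> (forall n, Rabs x <= k ^ n * B0) -> x = 0.
Proof.
  intros Hk H.
  destruct (Req_dec x 0) as [E|E]; auto. exfalso.
  assert (Hx : 0 < Rabs x) by (apply Rabs_pos_lt; auto).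
  assert (HB : 0 < B0).
  { specialize (H O). simpl in H. lra. }
  destruct (pow_lt_1_zero k ltac:(rewrite Rabs_right; lra) (Rabs x / B0)
      ltac:(apply Rdiv_lt_0_compat; lra)) as [N HN].
  specialize (HN N (le_n N)). specialize (H N).
  rewrite Rabs_right in HN by (apply Rle_ge, pow_le; lra).
  assert (k ^ N * B0 < Rabs x / B0 * B0) by (apply Rmult_lt_compat_r; lra).
  replace (Rabs x / B0 * B0) with (Rabs x) in H0 by (field; lra). lra.
Qed.

Lemma iter_bound (P : R -> Prop) k B0 : P B0 -> (forall B, P B -> P (k * B)) ->
  forall n, P (k ^ n * B0).
Proof.
  intros H0 H n. induction n; simpl.
  - rewrite Rmult_1_l; auto.
  - rewrite Rmult_assoc. apply H; auto.
Qed.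

Lemma rd_cont g x l : right_deriv g x l -> forall eps, 0 < eps ->
  exists d, 0 < d /\ forall h, 0 < h < d -> Rabs (g (x+h) - g x) < eps.
Proof.
  intros H eps He. destruct (rd_eps g x l H 1 ltac:(lra)) as [d [Hd Hq]].
  assert (Hl : 0 < Rabs l + 1) by (assert (0 <= Rabs l) by apply Rabs_pos; lra).
  exists (Rmin d (eps / (Rabs l + 1))). split.
  { apply Rmin_pos; auto. apply Rdiv_lt_0_compat; lra. }
  intros h Hh.
  assert (h < d) by (eapply Rlt_le_trans; [apply Hh|apply Rmin_l]).
  assert (h < eps / (Rabs l + 1)) by (eapply Rlt_le_trans; [apply Hh|apply Rmin_r]).
  specialize (Hq h ltac:(lra)).
  replace (g (x+h) - g x) with (h * ((g (x + h) - g x) / h - l) + h * l) by (field; lra).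
  eapply Rle_lt_trans; [apply Rabs_triang|]. rewrite !Rabs_mult, Rabs_right by lra.
  assert (h * Rabs ((g (x + h) - g x) / h - l) <= h * 1) by (apply Rmult_le_compat_l; lra).
  assert (h * (Rabs l + 1) < eps / (Rabs l + 1) * (Rabs l + 1)) by (apply Rmult_lt_compat_r; lra).
  replace (eps / (Rabs l + 1) * (Rabs l + 1)) with eps in H3 by (field; lra).
  lra.
Qed.

Lemma small_near0 C r eps : 0 < r -> 0 < eps -> exists s, 0 < s < r /\ Rabs C * s <= eps.
Proof.
  intros Hr He. assert (0 <= Rabs C) by apply Rabs_pos.
  exists (Rmin (r/2) (eps / (Rabs C + 1))). split; [split|].
  - apply Rmin_pos; [lra| apply Rdiv_lt_0_compat; lra].
  - eapply Rle_lt_trans; [apply Rmin_l|lra].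
  - assert (Rmin (r/2) (eps / (Rabs C + 1)) <= eps / (Rabs C + 1)) by apply Rmin_r.
    assert (0 < Rmin (r/2) (eps / (Rabs C + 1))) by (apply Rmin_pos; [lra| apply Rdiv_lt_0_compat; lra]).
    assert (Rabs C * Rmin (r / 2) (eps / (Rabs C + 1)) <= (Rabs C + 1) * (eps / (Rabs C + 1))).
    { apply Rmult_le_compat; lra. }
    replace ((Rabs C + 1) * (eps / (Rabs C + 1))) with eps in H2 by (field; lra). lra.
Qed.

Lemma U0 a v : radial_sol (fun r y => a r * y) v -> v 0 = 0 ->
  (exists d0 A, 0 < d0 /\ forall s, 0 < s < d0 -> Rabs (a s) <= A) ->
  exists d, 0 < d /\ forall s, 0 <= s <= d -> v s = 0.
Proof.
  intros Hv H0 [d0 [A [Hd0 HA]]].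
  assert (Hv' := Hv). destruct Hv' as [_ [Hrd _]].
  destruct (rd_cont v 0 0 Hrd 1 ltac:(lra)) as [d1 [Hd1 Hc1]].
  assert (Hb1 : forall s, 0 < s < d1 -> Rabs (v s) < 1).
  { intros s Hs. specialize (Hc1 s Hs). rewrite Rplus_0_l, H0, Rminus_0_r in Hc1. exact Hc1. }
  set (A' := Rabs A).
  assert (HA' : 0 <= A') by apply Rabs_pos.
  destruct (N0_bound (fun r y => a r * y) v Hv) as [d2 [C [Hd2 HC]]].
  { exists (Rmin d0 d1), A'. split; [apply Rmin_pos; lra|].
    intros s Hs. 
    assert (s < d0) by (eapply Rlt_le_trans; [apply Hs|apply Rmin_l]).
    assert (s < d1) by (eapply Rlt_le_trans; [apply Hs|apply Rmin_r]).
    rewrite Rabs_mult. replace A' with (A' * 1) by ring.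
    apply Rmult_le_compat; try apply Rabs_pos.
    - eapply Rle_trans; [apply HA; lra| apply Rle_abs].
    - left; apply Hb1; lra. }
  set (m := Rmin (Rmin d0 d1) (Rmin d2 (/ (2 * (A' + 1))))).
  assert (Hm : 0 < m /\ m <= d0 /\ m <= d1 /\ m <= d2 /\ m <= / (2 * (A' + 1))).
  { unfold m. repeat split.
    - apply Rmin_pos; apply Rmin_pos; try lra. apply Rinv_0_lt_compat; lra.
    - eapply Rle_trans; [apply Rmin_l| apply Rmin_l].
    - eapply Rle_trans; [apply Rmin_l| apply Rmin_r].
    - eapply Rle_trans; [apply Rmin_r| apply Rmin_l].
    - eapply Rle_trans; [apply Rmin_r| apply Rmin_r]. }
  set (d := m / 2).
  assert (Hd : 0 < d /\ d < d0 /\ d < d1 /\ d < d2 /\ d * A' < 1/2 /\ d < 1/2).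
  { unfold d. destruct Hm as [? [? [? [? ?]]]].
    assert (Hinv : (A' + 1) * / (2 * (A' + 1)) = 1/2) by (field; lra).
    assert (m * (A' + 1) <= / (2 * (A' + 1)) * (A' + 1)) by (apply Rmult_le_compat_r; lra).
    assert (E1 : m / 2 * A' = (m * (A' + 1) - m) / 2) by field.
    assert (E2 : / (2 * (A' + 1)) * (A' + 1) = 1/2) by (field; lra).
    assert (/ (2 * (A' + 1)) <= 1/2).
    { rewrite <- E2. replace (/ (2 * (A' + 1))) with (/ (2 * (A' + 1)) * 1) at 1 by ring.
      apply Rmult_le_compat_l; [left; apply Rinv_0_lt_compat|]; lra. }
    lra. }
  destruct Hd as [Hd [Hdd0 [Hdd1 [Hdd2 [HdA Hdh]]]]].
  set (k := d * d * A').
  assert (Hk : 0 <= k < 1).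
  { unfold k. split.
    - apply Rmult_le_pos; [apply Rmult_le_pos|]; lra.
    - assert (d * (d * A') <= 1 * (d * A')) by (apply Rmult_le_compat_r; [apply Rmult_le_pos|]; lra).
      rewrite Rmult_assoc. lra. }
  set (P := fun B => forall s, 0 < s <= d -> Rabs (v s) <= B).
  assert (Pstep : forall B, P B -> P (k * B)).
  { intros B HB.
    assert (B0 : 0 <= B) by (eapply Rle_trans; [apply Rabs_pos| apply (HB d); lra]).
    assert (HV1 : forall r, 0 < r <= d -> Rabs (Derive v r) <= d * A' * B).
    { intros r Hr. assert (Hg : Rabs (r * Derive v r) <= r * (d * A' * B)).
      { apply le_epsilon. intros eps Heps.
        destruct (small_near0 C r eps ltac:(lra) Heps) as [s [Hs HCs]].
        destruct (MVT' (fun t => t * Derive v t) (fun t => - (t * (a t * v t))) s r) as [e [He Ee]].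
        { intros z Hz. apply (rad_g _ v Hv z). lra. }
        { lra. }
        replace (r * Derive v r) with (s * Derive v s + (- (e * (a e * v e))) * (r - s)) by lra.
        eapply Rle_trans; [apply Rabs_triang|].
        assert (Rabs (s * Derive v s) <= Rabs C * s).
        { rewrite Rabs_mult, Rabs_right by lra. rewrite Rmult_comm.
          apply Rmult_le_compat_r; [lra|]. eapply Rle_trans; [apply HC; lra| apply Rle_abs]. }
        assert (Rabs (- (e * (a e * v e)) * (r - s)) <= r * (d * A' * B)).
        { rewrite Rabs_mult, Rabs_Ropp, !Rabs_mult, (Rabs_right e), (Rabs_right (r - s)) by lra.
          assert (Ha : Rabs (a e) <= A') by (eapply Rle_trans; [apply HA; lra| apply Rle_abs]).
          assert (Hve : Rabs (v e) <= B) by (apply HB; lra).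
          assert (Rabs (a e) * Rabs (v e) <= A' * B) by (apply Rmult_le_compat; auto; apply Rabs_pos).
          assert (0 <= Rabs (a e) * Rabs (v e)) by (apply Rmult_le_pos; apply Rabs_pos).
          assert (e * (Rabs (a e) * Rabs (v e)) <= d * (A' * B)) by (apply Rmult_le_compat; lra).
          assert (e * (Rabs (a e) * Rabs (v e)) * (r - s) <= d * (A' * B) * r).
          { apply Rmult_le_compat; try lra. apply Rmult_le_pos; lra. }
          lra. }
        lra. }
      rewrite Rabs_mult, (Rabs_right r) in Hg by lra.
      apply Rmult_le_reg_l with r; lra. }
    intros r Hr.
    assert (HdAB : 0 <= d * A' * B) by (apply Rmult_le_pos; [apply Rmult_le_pos|]; lra).
    apply le_epsilon. intros eps Heps.
    destruct (rd_cont v 0 0 Hrd eps Heps) as [d3 [Hd3 Hc3]].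
    set (s := Rmin (r/2) (d3/2)).
    assert (Hs : 0 < s < r /\ s < d3).
    { unfold s. split; [split|].
      - apply Rmin_pos; lra.
      - eapply Rle_lt_trans; [apply Rmin_l| lra].
      - eapply Rle_lt_trans; [apply Rmin_r| lra]. }
    specialize (Hc3 s ltac:(lra)). rewrite Rplus_0_l, H0, Rminus_0_r in Hc3.
    destruct (MVT' v (Derive v) s r) as [c [Hc Ec]].
    { intros z Hz. apply (rad_facts _ v Hv z). lra. }
    { lra. }
    replace (v r) with (v s + Derive v c * (r - s)) by lra.
    eapply Rle_trans; [apply Rabs_triang|].
    assert (HV1c : Rabs (Derive v c) <= d * A' * B).
    { apply HV1; lra. }
    rewrite Rabs_mult, (Rabs_right (r - s)) by lra.
    assert (Rabs (Derive v c) * (r - s) <= d * A' * B * d) by (apply Rmult_le_compat; try lra; apply Rabs_pos).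
    unfold k. lra. }
  assert (HP1 : P 1) by (intros s Hs; left; apply Hb1; lra).
  exists d. split; [lra|]. intros s Hs.
  destruct (Req_dec s 0) as [->|Hs0]; [exact H0|].
  apply (iter_zero _ k 1 Hk). intros n.
  apply (iter_bound P k 1 HP1 Pstep n). lra.
Qed.

Lemma UT a v T : radial_sol (fun r y => a r * y) v -> 0 < T < 1 -> v T = 0 -> Derive v T = 0 ->
  (exists d0 A, 0 < d0 /\ forall s, T <= s < T + d0 -> Rabs (a s) <= A) ->
  exists d, 0 < d /\ forall s, T <= s <= T + d -> v s = 0.
Proof.
  intros Hv HT H0 H1 [d0 [A [Hd0 HA]]].
  destruct (rad_facts _ v Hv T HT) as [Dv DV].
  destruct (cont_eps v T (ex_derive_continuous v T (ex_intro _ _ Dv)) 1 ltac:(lra)) as [d1 [Hd1 Hc1]].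
  destruct (cont_eps (Derive v) T (ex_derive_continuous _ T (ex_intro _ _ DV)) 1 ltac:(lra)) as [d2 [Hd2 Hc2]].
  set (A' := Rabs A). assert (HA' : 0 <= A') by apply Rabs_pos.
  set (M := / T + A' + 1).
  assert (HiT : 0 < / T) by (apply Rinv_0_lt_compat; lra).
  assert (HM : 1 <= M) by (unfold M; lra).
  set (m := Rmin (Rmin d0 d1) (Rmin d2 (Rmin (1 - T) (/ (2 * M))))).
  assert (Hm : 0 < m /\ m <= d0 /\ m <= d1 /\ m <= d2 /\ m <= 1 - T /\ m <= / (2 * M)).
  { unfold m. repeat split.
    - repeat apply Rmin_pos; try lra. apply Rinv_0_lt_compat; lra.
    - eapply Rle_trans; [apply Rmin_l| apply Rmin_l].
    - eapply Rle_trans; [apply Rmin_l| apply Rmin_r].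
    - eapply Rle_trans; [apply Rmin_r| apply Rmin_l].
    - eapply Rle_trans; [apply Rmin_r| eapply Rle_trans; [apply Rmin_r| apply Rmin_l]].
    - eapply Rle_trans; [apply Rmin_r| eapply Rle_trans; [apply Rmin_r| apply Rmin_r]]. }
  set (d := m / 2).
  set (k := d * M).
  assert (Hk : 0 <= k < 1 /\ 0 < d /\ d < d0 /\ d < d1 /\ d < d2 /\ T + d < 1).
  { destruct Hm as [? [? [? [? [? ?]]]]].
    assert (m * M <= / (2 * M) * M) by (apply Rmult_le_compat_r; lra).
    replace (/ (2 * M) * M) with (1/2) in H7 by (field; lra).
    assert (0 <= m / 2 * M) by (apply Rmult_le_pos; lra).
    replace (m / 2 * M) with (m * M / 2) in * by field.
    unfold k, d. replace (m / 2 * M) with (m * M / 2) by field. repeat split; lra. }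
  destruct Hk as [Hk [Hd [Hdd0 [Hdd1 [Hdd2 HdT]]]]].
  set (P := fun B => forall s, T <= s <= T + d -> Rabs (v s) <= B /\ Rabs (Derive v s) <= B).
  assert (Pstep : forall B, P B -> P (k * B)).
  { intros B HB.
    assert (B0 : 0 <= B) by (eapply Rle_trans; [apply Rabs_pos| apply (HB T); lra]).
    assert (HkB : 0 <= k * B) by (apply Rmult_le_pos; lra).
    intros r Hr. destruct (Req_dec r T) as [->|HrT].
    { rewrite H0, H1, Rabs_R0. lra. }
    destruct (MVT' (Derive v) (fun t => - (Derive v t / t) - a t * v t) T r) as [c [Hc Ec]].
    { intros z Hz. apply (rad_facts _ v Hv z). lra. }
    { lra. }
    destruct (MVT' v (Derive v) T r) as [c' [Hc' Ec']].
    { intros z Hz. apply (rad_facts _ v Hv z). lra. }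
    { lra. }
    destruct (HB c ltac:(lra)) as [Hvc HVc].
    destruct (HB c' ltac:(lra)) as [_ HVc'].
    assert (Hac : Rabs (a c) <= A') by (eapply Rle_trans; [apply HA; lra| apply Rle_abs]).
    split.
    - replace (v r) with (Derive v c' * (r - T)) by lra.
      rewrite Rabs_mult, (Rabs_right (r - T)) by lra.
      assert (Rabs (Derive v c') * (r - T) <= B * d) by (apply Rmult_le_compat; try lra; apply Rabs_pos).
      assert (B * d <= k * B).
      { unfold k. replace (d * M * B) with (B * d * M) by ring.
        replace (B * d) with (B * d * 1) at 1 by ring. apply Rmult_le_compat_l; [apply Rmult_le_pos|]; lra. }
      lra.
    - replace (Derive v r) with ((- (Derive v c / c) - a c * v c) * (r - T)) by lra.
      rewrite Rabs_mult, (Rabs_right (r - T)) by lra.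
      assert (Rabs (- (Derive v c / c) - a c * v c) <= B * M).
      { unfold Rminus. eapply Rle_trans; [apply Rabs_triang|].
        rewrite !Rabs_Ropp, Rabs_mult. unfold Rdiv. rewrite Rabs_mult.
        rewrite (Rabs_right (/ c)) by (left; apply Rinv_0_lt_compat; lra).
        assert (/ c <= / T) by (apply Rinv_le_contravar; lra).
        assert (Rabs (Derive v c) * / c <= B * / T).
        { apply Rmult_le_compat; try lra; try apply Rabs_pos. left; apply Rinv_0_lt_compat; lra. }
        assert (Rabs (a c) * Rabs (v c) <= A' * B) by (apply Rmult_le_compat; auto; apply Rabs_pos).
        unfold M. nra. }
      assert (Rabs (- (Derive v c / c) - a c * v c) * (r - T) <= B * M * d).
      { apply Rmult_le_compat; try lra; apply Rabs_pos. }
      unfold k. nra. }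
  assert (HP1 : P 1).
  { intros s Hs. split.
    - replace (v s) with (v s - v T) by (rewrite H0; ring). left; apply Hc1.
      rewrite Rabs_right; lra.
    - replace (Derive v s) with (Derive v s - Derive v T) by (rewrite H1; ring). left; apply Hc2.
      rewrite Rabs_right; lra. }
  exists d. split; [lra|]. intros s Hs.
  apply (iter_zero _ k 1 Hk). intros n.
  apply (iter_bound P k 1 HP1 Pstep n). lra.
Qed.

Lemma lub_prefix (P : R -> Prop) b : 0 < b -> P 0 ->
  exists xi, 0 <= xi <= b /\ (forall s, 0 <= s < xi -> P s) /\
    (xi < b -> forall eta, 0 < eta -> exists s, xi <= s < xi + eta /\ s <= b /\ ~ P s).
Proof.
  intros Hb H0.
  set (E := fun t => 0 <= t <= b /\ forall s, 0 <= s <= t -> P s).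
  assert (HE0 : E 0).
  { split; [lra|]. intros s Hs. replace s with 0 by lra. exact H0. }
  destruct (completeness E) as [xi [Hub Hlub]].
  { exists b. intros t [Ht _]. lra. }
  { exists 0; exact HE0. }
  assert (Hx0 : 0 <= xi) by (apply Hub; exact HE0).
  assert (Hxb : xi <= b) by (apply Hlub; intros t [Ht _]; lra).
  assert (Hbelow : forall s, 0 <= s < xi -> P s).
  { intros s Hs. apply NNPP. intro HnP.
    assert (xi <= s); [|lra].
    apply Hlub. intros t [Ht Ht2]. destruct (Rle_dec t s) as [|Hts]; [auto|].
    exfalso. apply HnP. apply Ht2. lra. }
  exists xi. split; [lra|]. split; [exact Hbelow|].
  intros Hxib eta Heta. apply NNPP. intro Hno.
  set (t := Rmin (xi + eta/2) b).
  assert (Ht : xi < t /\ t <= b /\ t <= xi + eta/2).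
  { unfold t. split; [|split; [apply Rmin_r| apply Rmin_l]].
    apply Rmin_glb_lt; lra. }
  assert (E t).
  { split; [lra|]. intros s Hs.
    destruct (Rlt_le_dec s xi) as [Hsx|Hsx]; [apply Hbelow; lra|].
    apply NNPP. intro HnP. apply Hno. exists s. repeat split; try lra; auto. }
  assert (t <= xi) by (apply Hub; auto). lra.
Qed.

Lemma E_deriv (w W1 F Z : R -> R) r dW1 dF dZ :
  is_derive w r (W1 r) -> is_derive W1 r dW1 -> is_derive F r dF -> is_derive Z r dZ -> Z r <> 0 ->
  is_derive (fun s => s * w s * W1 s + s^2 * (w s)^2 * F s / Z s) r
   (W1 r * w r + r * W1 r * W1 r + r * w r * dW1 +
    ((2 * r * (w r)^2 * F r + 2 * r^2 * w r * W1 r * F r + r^2 * (w r)^2 * dF) * Z r - r^2 * (w r)^2 * F r * dZ) / (Z r)^2).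
Proof.
  intros Hw HW HF HZ HZ0.
  auto_derive.
  - repeat split; try (eexists; eassumption). auto.
  - replace (Derive (fun x => w x) r) with (W1 r) by (symmetry; apply is_derive_unique; exact Hw).
    replace (Derive (fun x => W1 x) r) with dW1 by (symmetry; apply is_derive_unique; exact HW).
    replace (Derive (fun x => F x) r) with dF by (symmetry; apply is_derive_unique; exact HF).
    replace (Derive (fun x => Z x) r) with dZ by (symmetry; apply is_derive_unique; exact HZ).
    field. auto.
Qed.

Lemma mono_le E dE a b : (forall z, a < z < b -> is_derive E z (dE z)) ->
  (forall z, a < z < b -> 0 <= dE z) -> forall x y, a < x -> x <= y -> y < b -> E x <= E y.
Proof.
  intros HD Hpos x y Hx Hxy Hy. destruct (Rle_lt_or_eq_dec _ _ Hxy) as [Hl| ->]; [|lra].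
  destruct (MVT' E dE x y) as [c [Hc Ec]]; [intros z Hz; apply HD; lra| lra|].
  assert (0 <= dE c) by (apply Hpos; lra).
  assert (0 <= dE c * (y - x)) by (apply Rmult_le_pos; lra). lra.
Qed.

Lemma mono_lt E dE a b : (forall z, a < z < b -> is_derive E z (dE z)) ->
  (forall z, a < z < b -> 0 < dE z) -> forall x y, a < x -> x < y -> y < b -> E x < E y.
Proof.
  intros HD Hpos x y Hx Hxy Hy.
  destruct (MVT' E dE x y) as [c [Hc Ec]]; [intros z Hz; apply HD; lra| lra|].
  assert (0 < dE c) by (apply Hpos; lra).
  assert (0 < dE c * (y - x)) by (apply Rmult_lt_0_compat; lra). lra.
Qed.

Lemma anti_le E dE a b : (forall z, a < z < b -> is_derive E z (dE z)) ->
  (forall z, a < z < b -> dE z <= 0) -> forall x y, a < x -> x <= y -> y < b -> E y <= E x.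
Proof.
  intros HD Hpos x y Hx Hxy Hy. destruct (Rle_lt_or_eq_dec _ _ Hxy) as [Hl| ->]; [|lra].
  destruct (MVT' E dE x y) as [c [Hc Ec]]; [intros z Hz; apply HD; lra| lra|].
  assert (dE c <= 0) by (apply Hpos; lra).
  assert (dE c * (y - x) <= 0) by (apply Rmult_le_0_r; lra). lra.
Qed.

Lemma anti_lt E dE a b : (forall z, a < z < b -> is_derive E z (dE z)) ->
  (forall z, a < z < b -> dE z < 0) -> forall x y, a < x -> x < y -> y < b -> E y < E x.
Proof.
  intros HD Hpos x y Hx Hxy Hy.
  destruct (MVT' E dE x y) as [c [Hc Ec]]; [intros z Hz; apply HD; lra| lra|].
  assert (dE c < 0) by (apply Hpos; lra).
  assert (dE c * (y - x) < 0) by (apply Rmult_neg_pos; lra). lra.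
Qed.

Lemma g_neg q v X : radial_sol q v -> 0 < X < 1 ->
  (exists d0 K, 0 < d0 /\ forall s, 0 < s < d0 -> Rabs (q s (v s)) <= K) ->
  (forall s, 0 < s < X -> 0 < q s (v s)) -> 0 <= q X (v X) -> X * Derive v X < 0.
Proof.
  intros Hv HX Hb Hpos HXp.
  destruct (N0_bound q v Hv Hb) as [d [C [Hd HC]]].
  set (g := fun t => t * Derive v t).
  assert (HD : forall z, 0 < z < 1 -> is_derive g z (- (z * q z (v z)))) by (intros; apply rad_g; auto).
  assert (H1 : g (X/2) <= 0).
  { apply le_epsilon. intros eps He. rewrite Rplus_0_l.
    destruct (small_near0 C (Rmin (X/2) d) eps) as [s [Hs Hcs]]; auto.
    { apply Rmin_pos; lra. }
    assert (s < X/2) by (eapply Rlt_le_trans; [apply Hs| apply Rmin_l]).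
    assert (s < d) by (eapply Rlt_le_trans; [apply Hs| apply Rmin_r]).
    assert (g (X/2) <= g s).
    { apply (anti_le g (fun z => - (z * q z (v z))) 0 X); try lra.
      - intros; apply HD; lra.
      - intros z Hz. assert (0 < q z (v z)) by (apply Hpos; lra).
        assert (0 < z * q z (v z)) by (apply Rmult_lt_0_compat; lra). lra. }
    assert (g s <= Rabs C * s).
    { unfold g. eapply Rle_trans; [apply Rle_abs|]. rewrite Rabs_mult, Rabs_right by lra.
      rewrite Rmult_comm. apply Rmult_le_compat_r; [lra|].
      eapply Rle_trans; [apply HC; lra| apply Rle_abs]. }
    lra. }
  assert (H2 : g (3 * X / 4) < g (X/2)).
  { apply (anti_lt g (fun z => - (z * q z (v z))) 0 X); try lra.
    - intros; apply HD; lra.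
    - intros z Hz. assert (0 < q z (v z)) by (apply Hpos; lra).
      assert (0 < z * q z (v z)) by (apply Rmult_lt_0_compat; lra). lra. }
  assert (H3 : g X <= g (3 * X / 4)).
  { destruct (MVT' g (fun z => - (z * q z (v z))) (3 * X / 4) X) as [c [Hc Ec]].
    { intros z Hz; apply HD; lra. }
    { lra. }
    assert (0 <= q c (v c)).
    { destruct (Rle_lt_or_eq_dec _ _ (proj2 Hc)) as [Hl| ->]; auto. left; apply Hpos; lra. }
    assert (0 <= c * q c (v c)) by (apply Rmult_le_pos; lra).
    assert (0 <= c * q c (v c) * (X - 3 * X / 4)) by (apply Rmult_le_pos; lra).
    lra. }
  unfold g in *. lra.
Qed.

Lemma bnd_near0 (g u : R -> R) : continuous g (u 0) -> right_deriv u 0 0 ->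
  exists d B, 0 < d /\ forall s, 0 < s < d -> Rabs (g (u s)) <= B.
Proof.
  intros Hg Hu. destruct (cont_eps g (u 0) Hg 1 ltac:(lra)) as [d1 [Hd1 H1]].
  destruct (rd_cont u 0 0 Hu d1 Hd1) as [d2 [Hd2 H2]].
  exists d2, (Rabs (g (u 0)) + 1). split; auto. intros s Hs.
  specialize (H2 s Hs). rewrite Rplus_0_l in H2. specialize (H1 _ H2).
  replace (g (u s)) with (g (u 0) + (g (u s) - g (u 0))) by ring.
  eapply Rle_trans; [apply Rabs_triang|]. lra.
Qed.

Lemma bnd_near1 (g u : R -> R) l : right_deriv g 0 l -> filterlim u (at_left 1) (locally 0) ->
  (forall s, 0 <= s < 1 -> 0 < u s) ->
  exists d B, 0 < d /\ forall s, 1 - d < s < 1 -> Rabs (g (u s)) <= B.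
Proof.
  intros Hg Hu Hpos. destruct (rd_cont g 0 l Hg 1 ltac:(lra)) as [d1 [Hd1 H1]].
  destruct (left_eps u 1 0 Hu d1 Hd1) as [d2 [Hd2 H2]].
  exists (Rmin d2 1), (Rabs (g 0) + 1). split; [apply Rmin_pos; lra|]. intros s Hs.
  assert (1 - d2 < s) by (assert (Rmin d2 1 <= d2) by apply Rmin_l; lra).
  assert (0 < s) by (assert (Rmin d2 1 <= 1) by apply Rmin_r; lra).
  specialize (H2 s ltac:(lra)). rewrite Rminus_0_r in H2.
  assert (0 < u s) by (apply Hpos; lra).
  rewrite Rabs_right in H2 by lra.
  specialize (H1 (u s) ltac:(lra)). rewrite Rplus_0_l in H1.
  replace (g (u s)) with (g 0 + (g (u s) - g 0)) by ring.
  eapply Rle_trans; [apply Rabs_triang|]. lra.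
Qed.

Lemma bnd_cont (h : R -> R) T : continuous h T ->
  exists d B, 0 < d /\ forall s, Rabs (s - T) < d -> Rabs (h s) <= B.
Proof.
  intros Hh. destruct (cont_eps h T Hh 1 ltac:(lra)) as [d1 [Hd1 H1]].
  exists d1, (Rabs (h T) + 1). split; auto. intros s Hs. specialize (H1 s Hs).
  replace (h s) with (h T + (h s - h T)) by ring.
  eapply Rle_trans; [apply Rabs_triang|]. lra.
Qed.

Lemma lim_opp {T} (F : (T -> Prop) -> Prop) {FF : Filter F} (g : T -> R) l :
  filterlim g F (locally l) -> filterlim (fun x => - g x) F (locally (- l)).
Proof.
  intros H. exact (filterlim_comp _ _ _ g opp F (locally l) (locally (opp l)) H (filterlim_opp l)).
Qed.

Lemma radial_opp a w : radial_sol (fun r y => a r * y) w ->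
  radial_sol (fun r y => a r * y) (fun r => - w r).
Proof.
  intros [H1 [H2 [H3 H4]]].
  assert (ED : Derive (fun r => - w r) = fun r => - Derive w r).
  { apply functional_extensionality. intro x. apply Derive_opp. }
  split; [|split; [|split]].
  - intros r Hr. destruct (H1 r Hr) as [A [B C]]. split; [|split].
    + exists (opp (Derive w r)). exact (is_derive_opp _ _ _ (Derive_correct _ _ A)).
    + rewrite ED. exists (opp (Derive (Derive w) r)). exact (is_derive_opp _ _ _ (Derive_correct _ _ B)).
    + rewrite ED. rewrite Derive_opp. lra.
  - unfold right_deriv in *.
    replace 0 with (- 0) at 2 by ring.
    eapply filterlim_ext; [|apply (lim_opp _ _ _ H2)].
    intros h. simpl. unfold Rdiv. ring.
  - exact (lim_opp (at_left 1) w (w 1) H3).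
  - rewrite H4; lra.
Qed.

Lemma E_gen r w W F Z : 0 < r <= 1 -> Z <> 0 ->
  Rabs (r * w * W + r^2 * w^2 * F / Z) <= r * (Rabs w * Rabs W + w^2 * Rabs F / Rabs Z).
Proof.
  intros Hr HZ. eapply Rle_trans; [apply Rabs_triang|].
  assert (HZp : 0 < Rabs Z) by (apply Rabs_pos_lt; auto).
  rewrite !Rabs_mult. unfold Rdiv. rewrite Rabs_mult, Rabs_inv.
  rewrite (Rabs_right r) by lra. rewrite !Rabs_mult.
  rewrite (Rabs_right (r^2)) by (apply Rle_ge, pow_le; lra).
  rewrite (Rabs_right (w^2)) by (apply Rle_ge, pow2_ge_0).
  assert (0 <= w ^ 2 * Rabs F * / Rabs Z).
  { apply Rmult_le_pos; [apply Rmult_le_pos; [apply pow2_ge_0| apply Rabs_pos]|].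
    left; apply Rinv_0_lt_compat; auto. }
  assert (r ^ 2 * w ^ 2 * Rabs F * / Rabs Z <= r * (w ^ 2 * Rabs F * / Rabs Z)).
  { replace (r ^ 2 * w ^ 2 * Rabs F * / Rabs Z) with (r * (r * (w ^ 2 * Rabs F * / Rabs Z))) by ring.
    apply Rmult_le_compat_l; [lra|]. replace (w ^ 2 * Rabs F * / Rabs Z) with (1 * (w ^ 2 * Rabs F * / Rabs Z)) at 2 by ring.
    apply Rmult_le_compat_r; lra. }
  nra.
Qed.

Lemma E_est0 r w W F Z a b c d : 0 < r <= 1 -> Rabs w <= a -> Rabs W <= b -> Rabs F <= c ->
  0 < d -> d <= Rabs Z ->
  Rabs (r * w * W + r^2 * w^2 * F / Z) <= r * (a * b + a * a * c / d).
Proof.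
  intros Hr Hw HW HF Hd HZ.
  assert (HZ0 : Z <> 0) by (intro E; rewrite E, Rabs_R0 in HZ; lra).
  eapply Rle_trans; [apply E_gen; auto|]. apply Rmult_le_compat_l; [lra|].
  assert (Rabs w * Rabs W <= a * b) by (apply Rmult_le_compat; auto; apply Rabs_pos).
  assert (w ^ 2 <= a * a) by (rewrite <- pow2_abs; simpl; rewrite Rmult_1_r; apply Rmult_le_compat; auto; apply Rabs_pos).
  assert (w ^ 2 * Rabs F <= a * a * c) by (apply Rmult_le_compat; auto; [apply pow2_ge_0| apply Rabs_pos]).
  assert (w ^ 2 * Rabs F / Rabs Z <= a * a * c / d).
  { unfold Rdiv. apply Rmult_le_compat; auto.
    - apply Rmult_le_pos; [apply pow2_ge_0| apply Rabs_pos].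
    - left; apply Rinv_0_lt_compat; lra.
    - apply Rinv_le_contravar; lra. }
  lra.
Qed.

Lemma FZ f f1 f2 u w xi :
  C2_on_nonneg f f1 f2 ->
  (forall x, 0 < x -> 0 < f x /\ 0 < f1 x) ->
  (forall x, 0 < x -> f2 x * f x - (f1 x) ^ 2 < 0) ->
  radial_sol (fun _ y => f y) u ->
  (forall r, 0 <= r < 1 -> 0 < u r) ->
  radial_sol (fun r y => f1 (u r) * y) w ->
  0 < xi < 1 -> w xi = 0 -> (forall s, 0 <= s < xi -> 0 < w s) -> False.
Proof.
  intros HC Hpos Hlc Hu Hup Hw Hxi Hwxi Hwpos.
  destruct HC as [HCx [Hrdf [Hrdf1 _]]].
  assert (fcont : forall x, 0 < x -> continuous f x).
  { intros x Hx. apply (ex_derive_continuous f x). exists (f1 x). apply HCx; auto. }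
  assert (f1cont : forall x, 0 < x -> continuous f1 x).
  { intros x Hx. apply (ex_derive_continuous f1 x). exists (f2 x). apply HCx; auto. }
  assert (Du := rad_facts _ u Hu). simpl in Du.
  assert (Dw := rad_facts _ w Hw). simpl in Dw.
  assert (Hu' := Hu). destruct Hu' as [_ [Hurd [Hul Hu1]]].
  assert (Hw' := Hw). destruct Hw' as [_ [Hwrd [Hwl Hw1]]].
  assert (Hul0 : filterlim u (at_left 1) (locally 0)) by (rewrite <- Hu1; exact Hul).
  assert (Hwl0 : filterlim w (at_left 1) (locally 0)) by (rewrite <- Hw1; exact Hwl).
  assert (DF : forall r, 0 < r < 1 -> is_derive (fun s => f (u s)) r (f1 (u r) * Derive u r)).
  { intros r Hr. eapply is_derive_eq.
    - apply (is_derive_comp f u r (f1 (u r)) (Derive u r)).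
      + apply HCx. apply Hup; lra.
      + apply Du; auto.
    - simpl. unfold scal; simpl. unfold mult; simpl. ring. }
  assert (Bu0 : exists d0 K, 0 < d0 /\ forall s, 0 < s < d0 -> Rabs ((fun _ y => f y) s (u s)) <= K).
  { apply bnd_near0; auto. apply fcont, Hup; lra. }
  assert (Bw0 : exists d0 K, 0 < d0 /\ forall s, 0 < s < d0 -> Rabs ((fun r y => f1 (u r) * y) s (w s)) <= K).
  { destruct (bnd_near0 f1 u (f1cont _ (Hup 0 ltac:(lra))) Hurd) as [d1 [B1 [Hd1 HB1]]].
    destruct (rd_cont w 0 0 Hwrd 1 ltac:(lra)) as [d2 [Hd2 HB2]].
    exists (Rmin d1 d2), (B1 * (Rabs (w 0) + 1)). split; [apply Rmin_pos; auto|].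
    intros s Hs. simpl. rewrite Rabs_mult.
    assert (s < d1) by (eapply Rlt_le_trans; [apply Hs|apply Rmin_l]).
    assert (s < d2) by (eapply Rlt_le_trans; [apply Hs|apply Rmin_r]).
    apply Rmult_le_compat; try apply Rabs_pos; [apply HB1; lra|].
    specialize (HB2 s ltac:(lra)). rewrite Rplus_0_l in HB2.
    replace (w s) with (w 0 + (w s - w 0)) by ring.
    eapply Rle_trans; [apply Rabs_triang|]. lra. }
  assert (U1neg : forall r, 0 < r < 1 -> Derive u r < 0).
  { intros r Hr. assert (r * Derive u r < 0).
    { apply (g_neg _ u r Hu Hr Bu0).
      - intros s Hs. simpl. apply Hpos, Hup; lra.
      - simpl. left; apply Hpos, Hup; lra. }
    nra. }
  assert (udec : forall r1 r2, 0 < r1 -> r1 < r2 -> r2 < 1 -> u r2 < u r1).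
  { intros r1 r2 H1 H2 H3. apply (anti_lt u (Derive u) 0 1);
      [intros z Hz; apply Du; auto | intros z Hz; apply U1neg; auto | lra | lra | lra]. }
  assert (Pdec : forall x y, 0 < x -> x < y -> f1 y / f y < f1 x / f x).
  { intros x y Hx Hxy.
    apply (anti_lt (fun t => f1 t / f t) (fun t => (f2 t * f t - f1 t * f1 t) / f t ^ 2) 0 (y + 1)); try lra.
    - intros z Hz. eapply is_derive_eq.
      + apply is_derive_div; [apply HCx; lra| apply HCx; lra| destruct (Hpos z) as [? ?]; lra].
      + reflexivity.
    - intros z Hz. destruct (Hpos z) as [? ?]; try lra. specialize (Hlc z ltac:(lra)).
      apply Rdiv_neg_pos; [simpl in Hlc; nra| apply pow_lt; lra]. }
  assert (pinc : forall r1 r2, 0 < r1 -> r1 < r2 -> r2 < 1 ->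
            f1 (u r1) / f (u r1) < f1 (u r2) / f (u r2)).
  { intros r1 r2 H1 H2 H3. apply Pdec; [apply Hup; lra| apply udec; lra]. }
  set (gam := - (xi * Derive u xi)).
  assert (Hgam : 0 < gam).
  { unfold gam. assert (Derive u xi < 0) by (apply U1neg; lra). nra. }
  assert (W1xi : Derive w xi < 0).
  { assert (xi * Derive w xi < 0); [|nra].
    apply (g_neg _ w xi Hw Hxi Bw0).
    - intros s Hs. simpl. apply Rmult_lt_0_compat; [apply Hpos, Hup; lra| apply Hwpos; lra].
    - simpl. rewrite Hwxi. lra. }
  set (Z := fun r => r * Derive u r + gam).
  assert (DZ : forall r, 0 < r < 1 -> is_derive Z r (- (r * f (u r)))).
  { intros r Hr. eapply is_derive_eq.
    - apply (is_derive_plus (fun s => s * Derive u s) (fun _ => gam)).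
      + apply (rad_g _ u Hu r Hr).
      + apply is_derive_const.
    - simpl. unfold plus, zero; simpl. ring. }
  assert (Zxi : Z xi = 0) by (unfold Z, gam; ring).
  assert (Zpos : forall r, 0 < r < xi -> 0 < Z r).
  { intros r Hr. rewrite <- Zxi. apply (anti_lt Z (fun r => - (r * f (u r))) 0 1); try lra.
    - intros z Hz; apply DZ; auto.
    - intros z Hz. assert (0 < f (u z)) by (apply Hpos, Hup; lra). nra. }
  assert (Zneg : forall r, xi < r < 1 -> Z r < 0).
  { intros r Hr. rewrite <- Zxi. apply (anti_lt Z (fun r => - (r * f (u r))) 0 1); try lra.
    - intros z Hz; apply DZ; auto.
    - intros z Hz. assert (0 < f (u z)) by (apply Hpos, Hup; lra). nra. }
  set (E := fun s => s * w s * Derive w s + s^2 * (w s)^2 * f (u s) / Z s).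
  set (dE := fun s => s * (Derive w s + s * w s * f (u s) / Z s)^2 +
                      s * (w s)^2 * (2 * f (u s) - gam * f1 (u s)) / Z s).
  assert (DE : forall r, 0 < r < 1 -> r <> xi -> is_derive E r (dE r)).
  { intros r Hr Hrxi.
    assert (HZr : Z r <> 0).
    { destruct (Rlt_or_le r xi) as [Hl|Hl].
      - assert (0 < Z r) by (apply Zpos; lra). lra.
      - assert (Z r < 0) by (apply Zneg; lra). lra. }
    eapply is_derive_eq.
    - apply (E_deriv w (Derive w) (fun s => f (u s)) Z r _ _ _ (proj1 (Dw r Hr)) (proj2 (Dw r Hr))
               (DF r Hr) (DZ r Hr) HZr).
    - unfold dE. unfold Z in *. cbv beta. match goal with |- @eq _ ?a ?b => change (@eq R a b) end. field. repeat split; try (intro; lra); auto. }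
  assert (Nxi : exists dl K, 0 < dl /\ 0 <= K /\
            forall h, h <> 0 -> Rabs h < dl -> Rabs (E (xi + h)) <= K * Rabs h).
  { destruct (deriv_eps w xi (Derive w xi) (proj1 (Dw xi Hxi)) 1 ltac:(lra)) as [d1 [Hd1 H1]].
    set (Fx := f (u xi)).
    assert (HFx : 0 < Fx) by (apply Hpos, Hup; lra).
    set (cz := xi * Fx / 2).
    assert (Hcz : 0 < cz) by (unfold cz; apply Rmult_lt_0_compat; [apply Rmult_lt_0_compat|]; lra).
    destruct (deriv_eps Z xi (- (xi * Fx)) (DZ xi Hxi) cz Hcz) as [d2 [Hd2 H2]].
    destruct (bnd_cont (Derive w) xi (ex_derive_continuous (Derive w) xi
                 (ex_intro _ _ (proj2 (Dw xi Hxi))))) as [d3 [BW [Hd3 H3]]].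
    destruct (bnd_cont (fun s => f (u s)) xi (ex_derive_continuous (fun s => f (u s)) xi
                 (ex_intro _ _ (DF xi Hxi)))) as [d4 [BF [Hd4 H4]]].
    set (Cw := Rabs (Derive w xi) + 1).
    assert (HCw : 0 < Cw) by (unfold Cw; assert (0 <= Rabs (Derive w xi)) by apply Rabs_pos; lra).
    set (K := Cw * Rabs BW + Cw * Cw * Rabs BF / cz).
    assert (HK : 0 <= K).
    { unfold K. assert (0 <= Rabs BW) by apply Rabs_pos. assert (0 <= Rabs BF) by apply Rabs_pos.
      assert (0 <= Cw * Rabs BW) by (apply Rmult_le_pos; lra).
      assert (0 <= Cw * Cw * Rabs BF / cz).
      { unfold Rdiv. apply Rmult_le_pos; [apply Rmult_le_pos; [apply Rmult_le_pos|]|]; try lra.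
        left; apply Rinv_0_lt_compat; lra. }
      lra. }
    set (dl := Rmin (Rmin d1 d2) (Rmin (Rmin d3 d4) (Rmin xi (1 - xi)))).
    assert (Hdl : 0 < dl /\ dl <= d1 /\ dl <= d2 /\ dl <= d3 /\ dl <= d4 /\ dl <= xi /\ dl <= 1 - xi).
    { unfold dl. repeat split.
      - repeat apply Rmin_pos; lra.
      - eapply Rle_trans; [apply Rmin_l| apply Rmin_l].
      - eapply Rle_trans; [apply Rmin_l| apply Rmin_r].
      - eapply Rle_trans; [apply Rmin_r| eapply Rle_trans; [apply Rmin_l| apply Rmin_l]].
      - eapply Rle_trans; [apply Rmin_r| eapply Rle_trans; [apply Rmin_l| apply Rmin_r]].
      - eapply Rle_trans; [apply Rmin_r| eapply Rle_trans; [apply Rmin_r| apply Rmin_l]].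
      - eapply Rle_trans; [apply Rmin_r| eapply Rle_trans; [apply Rmin_r| apply Rmin_r]]. }
    exists dl, K. split; [lra| split; [exact HK|]].
    intros h Hh0 Hh.
    assert (Hha : 0 < Rabs h) by (apply Rabs_pos_lt; auto).
    assert (Hr : 0 < xi + h <= 1) by (destruct (Rabs_def2 h dl) as [? ?]; lra).
    assert (Hwr : Rabs (w (xi + h)) <= Cw * Rabs h).
    { specialize (H1 h Hh0 ltac:(lra)). rewrite Hwxi, Rminus_0_r in H1.
      replace (w (xi + h)) with (w (xi + h) / h * h) by (field; auto).
      rewrite Rabs_mult. apply Rmult_le_compat_r; [lra|].
      replace (w (xi + h) / h) with ((w (xi + h) / h - Derive w xi) + Derive w xi) by ring.
      eapply Rle_trans; [apply Rabs_triang|]. unfold Cw. lra. }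
    assert (HZr : cz * Rabs h <= Rabs (Z (xi + h))).
    { specialize (H2 h Hh0 ltac:(lra)). rewrite Zxi, Rminus_0_r in H2.
      replace (Z (xi + h)) with (Z (xi + h) / h * h) by (field; auto).
      rewrite Rabs_mult. apply Rmult_le_compat_r; [lra|].
      assert (Hq : Rabs (- (xi * Fx)) <= Rabs (Z (xi + h) / h) + Rabs (Z (xi + h) / h - - (xi * Fx))).
      { replace (- (xi * Fx)) with (Z (xi + h) / h - (Z (xi + h) / h - - (xi * Fx))) at 1 by ring.
        apply Rabs_triang_inv2 || (eapply Rle_trans; [apply Rabs_triang|]; rewrite Rabs_Ropp; lra). }
      rewrite Rabs_Ropp, Rabs_right in Hq by (apply Rle_ge, Rmult_le_pos; lra).
      unfold cz in *. lra. }
    assert (HWr : Rabs (Derive w (xi + h)) <= Rabs BW).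
    { eapply Rle_trans; [apply H3| apply Rle_abs]. replace (xi + h - xi) with h by ring. lra. }
    assert (HFr : Rabs (f (u (xi + h))) <= Rabs BF).
    { eapply Rle_trans; [apply (H4 (xi + h))| apply Rle_abs]. replace (xi + h - xi) with h by ring. lra. }
    unfold E.
    eapply Rle_trans; [apply (E_est0 _ _ _ _ _ (Cw * Rabs h) (Rabs BW) (Rabs BF) (cz * Rabs h)); auto|].
    { apply Rmult_lt_0_compat; lra. }
    replace (Cw * Rabs h * Rabs BW + Cw * Rabs h * (Cw * Rabs h) * Rabs BF / (cz * Rabs h))
      with (K * Rabs h) by (unfold K; field; split; lra).
    assert (0 <= K * Rabs h) by (apply Rmult_le_pos; lra).
    replace (K * Rabs h) with (1 * (K * Rabs h)) at 2 by ring.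
    apply Rmult_le_compat_r; lra. }
  destruct Nxi as [dl [Kx [Hdl [HKx HNxi]]]].
  destruct (classic (exists rho, xi < rho < 1 /\ gam * f1 (u rho) <= 2 * f (u rho))) as [[rho [Hrho Hle]] | Hno].
  -
    assert (HB1 : forall r, 0 < r < xi -> gam * f1 (u r) < 2 * f (u r)).
    { intros r Hr. assert (Hp := pinc r rho ltac:(lra) ltac:(lra) ltac:(lra)).
      assert (Ha : 0 < f (u r)) by (apply Hpos, Hup; lra).
      assert (Hb : 0 < f (u rho)) by (apply Hpos, Hup; lra).
      assert (gam * (f1 (u rho) / f (u rho)) <= 2).
      { apply Rmult_le_reg_r with (f (u rho)); auto.
        replace (gam * (f1 (u rho) / f (u rho)) * f (u rho)) with (gam * f1 (u rho)) by (field; lra). lra. }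
      assert (gam * (f1 (u r) / f (u r)) < 2).
      { eapply Rlt_le_trans; [|eassumption]. apply Rmult_lt_compat_l; auto. }
      replace (gam * f1 (u r)) with (gam * (f1 (u r) / f (u r)) * f (u r)) by (field; lra).
      nra. }
    assert (dEpos : forall z, 0 < z < xi -> 0 < dE z).
    { intros z Hz. unfold dE.
      assert (0 <= z * (Derive w z + z * w z * f (u z) / Z z) ^ 2) by (apply Rmult_le_pos; [lra| apply pow2_ge_0]).
      assert (0 < z * w z ^ 2 * (2 * f (u z) - gam * f1 (u z)) / Z z).
      { apply Rdiv_lt_0_compat; [|apply Zpos; lra].
        apply Rmult_lt_0_compat; [apply Rmult_lt_0_compat; [lra| apply pow_lt, Hwpos; lra]|].
        specialize (HB1 z Hz). lra. }
      lra. }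
    assert (Einc : forall x y, 0 < x -> x < y -> y < xi -> E x < E y).
    { apply (mono_lt E dE 0 xi); auto. intros z Hz; apply DE; lra. }
    assert (N0E : exists d K, 0 < d /\ forall s, 0 < s < d -> Rabs (E s) <= K * s).
    { destruct (rd_cont w 0 0 Hwrd 1 ltac:(lra)) as [d1 [Hd1 H1]].
      destruct (N0_bound _ w Hw Bw0) as [d2 [C2 [Hd2 H2]]].
      destruct (bnd_near0 f u (fcont _ (Hup 0 ltac:(lra))) Hurd) as [d3 [B3 [Hd3 H3]]].
      destruct (N0_bound _ u Hu Bu0) as [d4 [C4 [Hd4 H4]]].
      set (d5 := gam / (2 * (Rabs C4 + 1))).
      assert (Hd5 : 0 < d5) by (unfold d5; apply Rdiv_lt_0_compat; [lra|]; assert (0 <= Rabs C4) by apply Rabs_pos; lra).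
      set (d := Rmin (Rmin d1 d2) (Rmin (Rmin d3 d4) (Rmin d5 xi))).
      assert (Hd : 0 < d /\ d <= d1 /\ d <= d2 /\ d <= d3 /\ d <= d4 /\ d <= d5 /\ d <= xi).
      { unfold d. repeat split.
        - repeat apply Rmin_pos; lra.
        - eapply Rle_trans; [apply Rmin_l| apply Rmin_l].
        - eapply Rle_trans; [apply Rmin_l| apply Rmin_r].
        - eapply Rle_trans; [apply Rmin_r| eapply Rle_trans; [apply Rmin_l| apply Rmin_l]].
        - eapply Rle_trans; [apply Rmin_r| eapply Rle_trans; [apply Rmin_l| apply Rmin_r]].
        - eapply Rle_trans; [apply Rmin_r| eapply Rle_trans; [apply Rmin_r| apply Rmin_l]].
        - eapply Rle_trans; [apply Rmin_r| eapply Rle_trans; [apply Rmin_r| apply Rmin_r]]. }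
      exists d, ((Rabs (w 0) + 1) * Rabs C2 + (Rabs (w 0) + 1) * (Rabs (w 0) + 1) * Rabs B3 / (gam / 2)).
      split; [lra|]. intros s Hs.
      assert (Hws : Rabs (w s) <= Rabs (w 0) + 1).
      { specialize (H1 s ltac:(lra)). rewrite Rplus_0_l in H1.
        replace (w s) with (w 0 + (w s - w 0)) by ring.
        eapply Rle_trans; [apply Rabs_triang|]. lra. }
      assert (HWs : Rabs (Derive w s) <= Rabs C2) by (eapply Rle_trans; [apply H2; lra| apply Rle_abs]).
      assert (HFs : Rabs (f (u s)) <= Rabs B3) by (eapply Rle_trans; [apply H3; lra| apply Rle_abs]).
      assert (HZs : gam / 2 <= Rabs (Z s)).
      { assert (HU : Rabs (Derive u s) <= Rabs C4) by (eapply Rle_trans; [apply H4; lra| apply Rle_abs]).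
        assert (Rabs (s * Derive u s) <= gam / 2).
        { rewrite Rabs_mult, Rabs_right by lra.
          assert (s * Rabs (Derive u s) <= d5 * (Rabs C4 + 1)).
          { apply Rmult_le_compat; try lra; apply Rabs_pos. }
          replace (d5 * (Rabs C4 + 1)) with (gam / 2) in H by (unfold d5; field; assert (0 <= Rabs C4) by apply Rabs_pos; lra).
          exact H. }
        assert (- (s * Derive u s) <= Rabs (s * Derive u s)) by (rewrite <- Rabs_Ropp; apply Rle_abs).
        unfold Z. rewrite Rabs_right; lra. }
      unfold E. eapply Rle_trans;
        [apply (E_est0 s (w s) (Derive w s) (f (u s)) (Z s) (Rabs (w 0) + 1) (Rabs C2) (Rabs B3) (gam/2)); auto; lra
        | right; ring]. }
    destruct N0E as [d0 [K0 [Hd0 HN0]]].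
    assert (Ha : 0 <= E (xi / 4)).
    { apply le_epsilon. intros eps Heps.
      destruct (small_near0 K0 (Rmin d0 (xi/4)) eps) as [s [Hs Hks]]; auto.
      { apply Rmin_pos; lra. }
      assert (s < d0) by (eapply Rlt_le_trans; [apply Hs| apply Rmin_l]).
      assert (s < xi/4) by (eapply Rlt_le_trans; [apply Hs| apply Rmin_r]).
      assert (E s < E (xi/4)) by (apply Einc; lra).
      assert (Rabs (E s) <= K0 * s) by (apply HN0; lra).
      assert (K0 * s <= Rabs K0 * s) by (apply Rmult_le_compat_r; [lra| apply Rle_abs]).
      assert (- Rabs (E s) <= E s) by (pose proof (Rle_abs (- E s)) as HH; rewrite Rabs_Ropp in HH; lra).
      lra. }
    assert (Hb : E (xi / 2) <= 0).
    { apply le_epsilon. intros eps Heps. rewrite Rplus_0_l.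
      destruct (small_near0 Kx (Rmin dl (xi/2)) eps) as [s [Hs Hks]]; auto.
      { apply Rmin_pos; lra. }
      assert (s < dl) by (eapply Rlt_le_trans; [apply Hs| apply Rmin_l]).
      assert (s < xi/2) by (eapply Rlt_le_trans; [apply Hs| apply Rmin_r]).
      assert (E (xi / 2) < E (xi + - s)) by (apply Einc; lra).
      assert (Rabs (E (xi + - s)) <= Kx * Rabs (- s)) by (apply HNxi; [lra| rewrite Rabs_Ropp, Rabs_right; lra]).
      rewrite Rabs_Ropp, (Rabs_right s) in H2 by lra.
      assert (Kx * s <= Rabs Kx * s) by (apply Rmult_le_compat_r; [lra| apply Rle_abs]).
      assert (E (xi + - s) <= Rabs (E (xi + - s))) by apply Rle_abs.
      lra. }
    assert (E (xi / 4) < E (xi / 2)) by (apply Einc; lra).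
    lra.
  -
    assert (HA1 : forall r, xi < r < 1 -> 2 * f (u r) < gam * f1 (u r)).
    { intros r Hr. apply Rnot_le_lt. intro Hc. apply Hno. exists r. split; auto. }
    assert (dEnn : forall z, xi < z < 1 -> 0 <= dE z /\ (w z <> 0 -> 0 < dE z)).
    { intros z Hz. unfold dE.
      assert (0 <= z * (Derive w z + z * w z * f (u z) / Z z) ^ 2) by (apply Rmult_le_pos; [lra| apply pow2_ge_0]).
      assert (HZz : Z z < 0) by (apply Zneg; lra).
      specialize (HA1 z Hz).
      assert (Hq : 0 < (2 * f (u z) - gam * f1 (u z)) / Z z).
      { replace ((2 * f (u z) - gam * f1 (u z)) / Z z) with ((gam * f1 (u z) - 2 * f (u z)) / (- Z z)) by (field; lra).
        apply Rdiv_lt_0_compat; lra. }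
      replace (z * w z ^ 2 * (2 * f (u z) - gam * f1 (u z)) / Z z)
        with (z * w z ^ 2 * ((2 * f (u z) - gam * f1 (u z)) / Z z)) by (field; lra).
      split.
      - assert (0 <= z * w z ^ 2 * ((2 * f (u z) - gam * f1 (u z)) / Z z)); [|lra].
        apply Rmult_le_pos; [apply Rmult_le_pos; [lra| apply pow2_ge_0]| lra].
      - intros Hwz.
        assert (0 < z * w z ^ 2 * ((2 * f (u z) - gam * f1 (u z)) / Z z)); [|lra].
        apply Rmult_lt_0_compat; [apply Rmult_lt_0_compat; [lra| ]| lra].
        assert (0 < Rabs (w z)) by (apply Rabs_pos_lt; auto). rewrite <- pow2_abs. apply pow_lt; lra. }
    assert (Emono : forall x y, xi < x -> x <= y -> y < 1 -> E x <= E y).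
    { apply (mono_le E dE xi 1).
      - intros z Hz; apply DE; lra.
      - intros z Hz; apply dEnn; auto. }
    destruct (deriv_eps w xi (Derive w xi) (proj1 (Dw xi Hxi)) (- Derive w xi / 2) ltac:(lra)) as [d1 [Hd1 H1]].
    set (h0 := Rmin d1 (1 - xi) / 2).
    assert (Hh0 : 0 < h0 /\ h0 < d1 /\ xi + h0 < 1).
    { unfold h0. assert (0 < Rmin d1 (1 - xi)) by (apply Rmin_pos; lra).
      assert (Rmin d1 (1 - xi) <= d1) by apply Rmin_l.
      assert (Rmin d1 (1 - xi) <= 1 - xi) by apply Rmin_r. lra. }
    assert (wneg : forall z, xi < z <= xi + h0 -> w z < 0).
    { intros z Hz. specialize (H1 (z - xi) ltac:(lra) ltac:(rewrite Rabs_right; lra)).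
      replace (xi + (z - xi)) with z in H1 by ring. rewrite Hwxi, Rminus_0_r in H1.
      destruct (Rabs_def2 _ _ H1) as [Ha Hb].
      assert (w z / (z - xi) < 0) by lra.
      replace (w z) with (w z / (z - xi) * (z - xi)) by (field; lra).
      apply Rmult_neg_pos; lra. }
    assert (Einc : E (xi + h0 / 3) < E (xi + 2 * h0 / 3)).
    { apply (mono_lt E dE xi (xi + h0)); try lra.
      - intros z Hz; apply DE; lra.
      - intros z Hz. apply dEnn; [lra|]. assert (w z < 0) by (apply wneg; lra). lra. }
    assert (Ha : 0 <= E (xi + h0 / 3)).
    { apply le_epsilon. intros eps Heps.
      destruct (small_near0 Kx (Rmin dl (h0/3)) eps) as [s [Hs Hks]]; auto.
      { apply Rmin_pos; lra. }
      assert (s < dl) by (eapply Rlt_le_trans; [apply Hs| apply Rmin_l]).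
      assert (s < h0/3) by (eapply Rlt_le_trans; [apply Hs| apply Rmin_r]).
      assert (E (xi + s) <= E (xi + h0 / 3)) by (apply Emono; lra).
      assert (HE4 : Rabs (E (xi + s)) <= Kx * Rabs s) by (apply HNxi; [lra| rewrite Rabs_right; lra]).
      rewrite (Rabs_right s) in HE4 by lra.
      assert (Kx * s <= Rabs Kx * s) by (apply Rmult_le_compat_r; [lra| apply Rle_abs]).
      assert (- Rabs (E (xi + s)) <= E (xi + s)) by (pose proof (Rle_abs (- E (xi + s))) as HH; rewrite Rabs_Ropp in HH; lra).
      lra. }
    set (rs := xi + 2 * h0 / 3).
    assert (Hb : E rs <= 0).
    { assert (Hrs : xi < rs < 1) by (unfold rs; lra).
      set (czs := - Z rs).
      assert (Hczs : 0 < czs) by (unfold czs; assert (Z rs < 0) by (apply Zneg; lra); lra).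
      assert (HZs : forall s, rs <= s < 1 -> czs <= Rabs (Z s)).
      { intros s Hs. assert (Z s <= Z rs).
        { apply (anti_le Z (fun r => - (r * f (u r))) 0 1); try lra.
          - intros z Hz; apply DZ; auto.
          - intros z Hz. assert (0 < f (u z)) by (apply Hpos, Hup; lra). nra. }
        assert (- Z s <= Rabs (Z s)) by (rewrite <- Rabs_Ropp; apply Rle_abs).
        unfold czs; lra. }
      destruct (bnd_near1 f1 u (f2 0) Hrdf1 Hul0 Hup) as [d5 [B5 [Hd5 H5]]].
      destruct (left_eps w 1 0 Hwl0 1 ltac:(lra)) as [d6 [Hd6 H6]].
      destruct (N1 _ w Hw) as [d7 [C7 [Hd7 H7]]].
      { exists (Rmin d5 d6), (Rabs B5). split; [apply Rmin_pos; lra|].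
        intros s Hs. simpl. rewrite Rabs_mult.
        assert (Rmin d5 d6 <= d5) by apply Rmin_l. assert (Rmin d5 d6 <= d6) by apply Rmin_r.
        replace (Rabs B5) with (Rabs B5 * 1) by ring.
        apply Rmult_le_compat; try apply Rabs_pos.
        - eapply Rle_trans; [apply H5; lra| apply Rle_abs].
        - specialize (H6 s ltac:(lra)). rewrite Rminus_0_r in H6. lra. }
      destruct (bnd_near1 f u (f1 0) Hrdf Hul0 Hup) as [d8 [B8 [Hd8 H8]]].
      apply le_epsilon. intros eps Heps. rewrite Rplus_0_l.
      set (L := Rabs C7 + Rabs B8 / czs).
      assert (HL : 0 <= L).
      { unfold L. assert (0 <= Rabs C7) by apply Rabs_pos.
        assert (0 <= Rabs B8 / czs) by (apply Rmult_le_pos; [apply Rabs_pos| left; apply Rinv_0_lt_compat; lra]).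
        lra. }
      set (eta := Rmin 1 (eps / (L + 1))).
      assert (Heta : 0 < eta /\ eta <= 1 /\ eta * L <= eps).
      { unfold eta. split; [apply Rmin_pos; [lra| apply Rdiv_lt_0_compat; lra]| split; [apply Rmin_l|]].
        assert (Rmin 1 (eps / (L + 1)) <= eps / (L + 1)) by apply Rmin_r.
        assert (0 < Rmin 1 (eps / (L + 1))) by (apply Rmin_pos; [lra| apply Rdiv_lt_0_compat; lra]).
        assert (Rmin 1 (eps / (L + 1)) * L <= eps / (L + 1) * (L + 1)) by (apply Rmult_le_compat; lra).
        replace (eps / (L + 1) * (L + 1)) with eps in H2 by (field; lra). exact H2. }
      destruct (left_eps w 1 0 Hwl0 eta ltac:(lra)) as [d9 [Hd9 H9]].
      set (m := Rmin (Rmin d7 d8) (Rmin d9 (1 - rs))).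
      assert (Hm : 0 < m /\ m <= d7 /\ m <= d8 /\ m <= d9 /\ m <= 1 - rs).
      { unfold m. repeat split.
        - repeat apply Rmin_pos; lra.
        - eapply Rle_trans; [apply Rmin_l| apply Rmin_l].
        - eapply Rle_trans; [apply Rmin_l| apply Rmin_r].
        - eapply Rle_trans; [apply Rmin_r| apply Rmin_l].
        - eapply Rle_trans; [apply Rmin_r| apply Rmin_r]. }
      set (s := 1 - m / 2).
      assert (Hs : rs < s < 1 /\ 1 - d7 < s /\ 1 - d8 < s /\ 1 - d9 < s) by (unfold s; lra).
      assert (E rs <= E s) by (apply Emono; lra).
      assert (HEs : Rabs (E s) <= s * (eta * Rabs C7 + eta * eta * Rabs B8 / czs)).
      { unfold E. apply E_est0; try lra.
        - specialize (H9 s ltac:(lra)). rewrite Rminus_0_r in H9. lra.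
        - eapply Rle_trans; [apply H7; lra| apply Rle_abs].
        - eapply Rle_trans; [apply H8; lra| apply Rle_abs].
        - apply HZs; lra. }
      assert (s * (eta * Rabs C7 + eta * eta * Rabs B8 / czs) <= eta * L).
      { assert (0 <= Rabs C7) by apply Rabs_pos.
        assert (0 <= Rabs B8 / czs) by (apply Rmult_le_pos; [apply Rabs_pos| left; apply Rinv_0_lt_compat; lra]).
        replace (eta * Rabs C7 + eta * eta * Rabs B8 / czs) with (eta * (Rabs C7 + eta * (Rabs B8 / czs))) by (field; lra).
        assert (eta * (Rabs B8 / czs) <= Rabs B8 / czs).
        { replace (Rabs B8 / czs) with (1 * (Rabs B8 / czs)) at 2 by ring. apply Rmult_le_compat_r; lra. }
        assert (eta * (Rabs C7 + eta * (Rabs B8 / czs)) <= eta * L).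
        { apply Rmult_le_compat_l; [lra|]. unfold L. lra. }
        assert (0 <= eta * (Rabs C7 + eta * (Rabs B8 / czs))).
        { apply Rmult_le_pos; [lra|]. assert (0 <= eta * (Rabs B8 / czs)) by (apply Rmult_le_pos; lra). lra. }
        replace (eta * L) with (1 * (eta * L)) by ring.
        apply Rmult_le_compat; lra. }
      assert (E s <= Rabs (E s)) by apply Rle_abs.
      lra. }
    unfold rs in Hb. lra.
Qed.

Lemma core_pos f f1 f2 u w :
  C2_on_nonneg f f1 f2 ->
  (forall x, 0 < x -> 0 < f x /\ 0 < f1 x) ->
  (forall x, 0 < x -> f2 x * f x - (f1 x) ^ 2 < 0) ->
  radial_sol (fun _ y => f y) u ->
  (forall r, 0 <= r < 1 -> 0 < u r) ->
  radial_sol (fun r y => f1 (u r) * y) w ->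
  0 < w 0 -> forall r, 0 <= r < 1 -> 0 < w r.
Proof.
  intros HC Hpos Hlc Hu Hup Hw Hw0.
  apply NNPP. intro Hn. apply not_all_ex_not in Hn. destruct Hn as [r0 Hr0].
  apply imply_to_and in Hr0. destruct Hr0 as [Hr0 Hwr0].
  destruct (lub_prefix (fun s => 0 < w s) 1 ltac:(lra) Hw0) as [xi [Hxi [Hbel Habove]]].
  assert (Hxr0 : xi <= r0).
  { destruct (Rle_lt_dec xi r0) as [|Hl]; auto. exfalso. apply Hwr0, Hbel. lra. }
  assert (Hw' := Hw). destruct Hw' as [_ [Hwrd _]].
  destruct (rd_cont w 0 0 Hwrd (w 0) Hw0) as [d [Hd Hcd]].
  assert (Hxi0 : 0 < xi).
  { destruct (Rle_lt_or_eq_dec 0 xi (proj1 Hxi)) as [|Heq]; auto. exfalso.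
    destruct (Habove ltac:(lra) d Hd) as [s [Hs [Hs1 Hns]]]. apply Hns.
    destruct (Rle_lt_or_eq_dec 0 s ltac:(lra)) as [Hs0| <-]; auto.
    specialize (Hcd s ltac:(lra)). rewrite Rplus_0_l in Hcd.
    destruct (Rabs_def2 _ _ Hcd). lra. }
  assert (Hxi1 : 0 < xi < 1) by lra.
  destruct (rad_facts _ w Hw xi Hxi1) as [Dwx _].
  assert (Hc := ex_derive_continuous w xi (ex_intro _ _ Dwx)).
  assert (Hwxi : w xi = 0).
  { destruct (Rtotal_order (w xi) 0) as [Hl|[He|Hg]]; auto; exfalso.
    - destruct (cont_eps w xi Hc (- w xi) ltac:(lra)) as [d' [Hd' Hc']].
      set (y := xi - Rmin d' xi / 2).
      assert (0 < Rmin d' xi) by (apply Rmin_pos; lra).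
      assert (Rmin d' xi <= d') by apply Rmin_l. assert (Rmin d' xi <= xi) by apply Rmin_r.
      assert (0 < w y) by (apply Hbel; unfold y; lra).
      specialize (Hc' y ltac:(unfold y; rewrite Rabs_left; lra)).
      destruct (Rabs_def2 _ _ Hc'). lra.
    - destruct (cont_eps w xi Hc (w xi) ltac:(lra)) as [d' [Hd' Hc']].
      destruct (Habove ltac:(lra) d' Hd') as [s [Hs [Hs1 Hns]]]. apply Hns.
      specialize (Hc' s ltac:(rewrite Rabs_right; lra)).
      destruct (Rabs_def2 _ _ Hc'). lra. }
  apply (FZ f f1 f2 u w xi HC Hpos Hlc Hu Hup Hw Hxi1 Hwxi).
  intros s Hs. apply Hbel; lra.
Qed.

Lemma core_zero f f1 f2 u w :
  C2_on_nonneg f f1 f2 ->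
  radial_sol (fun _ y => f y) u ->
  (forall r, 0 <= r < 1 -> 0 < u r) ->
  radial_sol (fun r y => f1 (u r) * y) w ->
  w 0 = 0 -> forall r, 0 <= r <= 1 -> w r = 0.
Proof.
  intros HC Hu Hup Hw Hw0.
  destruct HC as [HCx _].
  assert (Hu' := Hu). destruct Hu' as [_ [Hurd _]].
  assert (f1cont : forall x, 0 < x -> continuous f1 x).
  { intros x Hx. apply (ex_derive_continuous f1 x). exists (f2 x). apply HCx; auto. }
  destruct (U0 (fun r => f1 (u r)) w Hw Hw0) as [d [Hd Hz]].
  { apply bnd_near0; auto. apply f1cont, Hup; lra. }
  destruct (lub_prefix (fun s => w s = 0) 1 ltac:(lra) Hw0) as [xi [Hxi [Hbel Habove]]].
  assert (Hx1 : xi = 1).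
  { destruct (Rle_lt_or_eq_dec _ _ (proj2 Hxi)) as [Hl|]; auto. exfalso.
    destruct (Rlt_or_le xi d) as [Hxd|Hxd].
    { destruct (Habove Hl (d - xi) ltac:(lra)) as [s [Hs [Hs1 Hns]]]. apply Hns, Hz; lra. }
    assert (Hxi1 : 0 < xi < 1) by lra.
    destruct (rad_facts _ w Hw xi Hxi1) as [Dwx _].
    assert (Hc := ex_derive_continuous w xi (ex_intro _ _ Dwx)).
    assert (Hwxi : w xi = 0).
    { destruct (Req_dec (w xi) 0) as [|Hne]; auto. exfalso.
      assert (Hp : 0 < Rabs (w xi)) by (apply Rabs_pos_lt; auto).
      destruct (cont_eps w xi Hc _ Hp) as [d' [Hd' Hc']].
      set (y := xi - Rmin d' xi / 2).
      assert (0 < Rmin d' xi) by (apply Rmin_pos; lra).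
      assert (Rmin d' xi <= d') by apply Rmin_l. assert (Rmin d' xi <= xi) by apply Rmin_r.
      assert (w y = 0) by (apply Hbel; unfold y; lra).
      specialize (Hc' y ltac:(unfold y; rewrite Rabs_left; lra)).
      rewrite H2, Rminus_0_l, Rabs_Ropp in Hc'. lra. }
    assert (HW1 : Derive w xi = 0).
    { destruct (Req_dec (Derive w xi) 0) as [|Hne]; auto. exfalso.
      assert (Hp : 0 < Rabs (Derive w xi)) by (apply Rabs_pos_lt; auto).
      destruct (deriv_eps w xi _ Dwx _ Hp) as [d' [Hd' Hc']].
      set (h := - (Rmin d' xi / 2)).
      assert (0 < Rmin d' xi) by (apply Rmin_pos; lra).
      assert (Rmin d' xi <= d') by apply Rmin_l. assert (Rmin d' xi <= xi) by apply Rmin_r.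
      assert (w (xi + h) = 0) by (apply Hbel; unfold h; lra).
      specialize (Hc' h ltac:(unfold h; lra) ltac:(unfold h; rewrite Rabs_left; lra)).
      rewrite H2, Hwxi in Hc'. unfold Rdiv in Hc'. rewrite Rminus_0_r, Rmult_0_l, Rminus_0_l, Rabs_Ropp in Hc'.
      lra. }
    destruct (UT (fun r => f1 (u r)) w xi Hw Hxi1 Hwxi HW1) as [d4 [Hd4 Hz4]].
    { assert (Hcc : continuous (fun s => f1 (u s)) xi).
      { apply (ex_derive_continuous (fun s => f1 (u s)) xi).
        exists (scal (Derive u xi) (f2 (u xi))).
        apply (is_derive_comp f1 u xi (f2 (u xi)) (Derive u xi)).
        - apply HCx, Hup; lra.
        - apply (rad_facts _ u Hu xi Hxi1). }
      destruct (bnd_cont _ xi Hcc) as [d5 [B5 [Hd5 H5]]].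
      exists d5, B5. split; auto. intros s Hs. apply H5. rewrite Rabs_right; lra. }
    destruct (Habove Hl d4 Hd4) as [s [Hs [Hs1 Hns]]]. apply Hns, Hz4; lra. }
  subst xi. intros r Hr.
  destruct (Rle_lt_or_eq_dec _ _ (proj2 Hr)) as [Hl| ->].
  - apply Hbel; lra.
  - destruct Hw as [_ [_ [_ H1]]]; exact H1.
Qed.

Theorem theorem3p1 (f f1 f2 u w : R -> R) :
  C2_on_nonneg f f1 f2 ->
  (forall x, 0 < x -> 0 < f x /\ 0 < f1 x) ->
  (forall x, 0 < x -> f2 x * f x - (f1 x) ^ 2 < 0) ->
  radial_sol (fun _ y => f y) u ->
  (forall r, 0 <= r < 1 -> 0 < u r) ->
  radial_sol (fun r y => f1 (u r) * y) w ->
  (exists r, 0 <= r <= 1 /\ w r <> 0) ->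
  (forall r, 0 <= r < 1 -> 0 < w r) \/ (forall r, 0 <= r < 1 -> w r < 0).
Proof.
  intros HC Hpos Hlc Hu Hup Hw Hnt.
  destruct (Rtotal_order (w 0) 0) as [Hl|[He|Hg]].
  - right. intros r Hr.
    assert (Hw' : radial_sol (fun r y => f1 (u r) * y) (fun r => - w r))
      by exact (radial_opp (fun r => f1 (u r)) w Hw).
    assert (0 < - w r); [|lra].
    apply (core_pos f f1 f2 u (fun r => - w r) HC Hpos Hlc Hu Hup Hw'); auto; lra.
  - exfalso. destruct Hnt as [r [Hr Hne]]. apply Hne.
    apply (core_zero f f1 f2 u w HC Hu Hup Hw He r Hr).
  - left. apply (core_pos f f1 f2 u w HC Hpos Hlc Hu Hup Hw Hg).
Qed.
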